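(* Let $n\ge2$ and let $\mathcal{S}$ be a quadric hypersurface in $\mathbb{R}^n$ containing at least two points but no line, with an affine change of variables $\mathbf{s}=T\mathbf{s}'+\mathbf{v}$ bringing it into one of the normal forms (1)–(3), and with the associated parameterisation $\boldsymbol{\sigma}(\mathbf{t})=T\boldsymbol{\sigma}'(\mathbf{t})+\mathbf{v}$, $\mathbf{t}\in D$, described in the context. Let $O\subseteq D\setminus\sigma_1^{-1}(0)$ be an open set. If there is $\mathbf{t}\in O$ such that \[\det\left(\frac{\partial\overline{\boldsymbol{\sigma}}'(\mathbf{t})}{\partial\mathbf{t}}\right)\neq0,\] where $\overline{\boldsymbol{\sigma}}'=(\sigma_1',\dots,\sigma_{n-1}')^T$, then $\boldsymbol{\sigma}(O)=\{\boldsymbol{\sigma}(\mathbf{t}):\mathbf{t}\in O\}$ is not contained in any (affine) hyperplane of $\mathbb{R}^n$ (i.e. $O$ satisfies the hyperplane condition).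
   Context: Let $\mathcal{S}=\{\mathbf{s}\in\mathbb{R}^n:\tfrac12\mathbf{s}^TA\mathbf{s}+\mathbf{b}^T\mathbf{s}+c=0\}$ with $A$ a nonzero real symmetric matrix, and assume $\mathcal{S}$ contains at least two points but no line. Let $T$ be an invertible real $n\times n$ matrix and $\mathbf{v}\in\mathbb{R}^n$ such that under $\mathbf{s}=T\mathbf{s}'+\mathbf{v}$ the equation of $\mathcal{S}$ becomes one of: (1) (when $\operatorname{rk}A=n-1$) $\sum_{j=1}^{n-1}\epsilon_js_j'^2=s_n'$ with $\epsilon_j\in\{-1,1\}$; (2) (when $\operatorname{rk}A=n$ and $A$ has eigenvalues of both signs) $s_1's_n'+\sum_{j=2}^{n-1}\epsilon_js_j'^2=c'$ with $c'\neq0$, $\epsilon_j\in\{-1,1\}$; (3) (when $\operatorname{rk}A=n$ and all eigenvalues of $A$ have the same sign) $\sum_{j=1}^ns_j'^2=1$. The parameterisation $\boldsymbol{\sigma}'=(\sigma_1',\dots,\sigma_n')^T$ of the normal form is: in case (1), $\sigma_j'(\mathbf{t})=t_j$ for $j\le n-1$, $\sigma_n'(\mathbf{t})=\sum_{j=1}^{n-1}\epsilon_jt_j^2$, $D=\mathbb{R}^{n-1}$; in case (2), $\sigma_j'(\mathbf{t})=t_j$ for $j\le n-1$, $\sigma_n'(\mathbf{t})=\frac{1}{t_1}\big(c'-\sum_{j=2}^{n-1}\epsilon_jt_j^2\big)$, $D=(\mathbb{R}\setminus\{0\})\times\mathbb{R}^{n-2}$; in case (3), $\boldsymbol{\sigma}'(\mathbf{t})=\boldsymbol{\tau}(\boldsymbol{\varphi})$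 with $\varphi_j=2\arctan(t_j)$, where $\boldsymbol{\tau}$ is the spherical-coordinate map $\tau_1=\cos\varphi_1$, $\tau_k=\sin\varphi_1\cdots\sin\varphi_{k-1}\cos\varphi_k$ for $2\le k\le n-1$, $\tau_n=\sin\varphi_1\cdots\sin\varphi_{n-1}$, $D=\mathbb{R}^{n-1}$. Then $\boldsymbol{\sigma}(\mathbf{t})=T\boldsymbol{\sigma}'(\mathbf{t})+\mathbf{v}$ with components $\sigma_1,\dots,\sigma_n$, and $\sigma_1^{-1}(0)$ is the zero set of $\sigma_1$. *)

(* Defs.v *)
From HB Require Import structures.
From mathcomp Require Import all_boot all_order all_algebra.
From mathcomp Require Import all_classical all_reals all_analysis.
Set Implicit Arguments. Unset Strict Implicit. Unset Printing Implicit Defensive.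
Import Order.TTheory GRing.Theory Num.Theory.
Import numFieldNormedType.Exports.
Local Open Scope ring_scope.
Local Open Scope classical_set_scope.

(* Dimension convention: n = p.+2 (so n >= 2), parameter dimension n-1 = p.+1.
   Indices are 0-based: paper's s_1..s_n are our s_0..s_(p.+1);
   paper's t_1..t_(n-1) are our t_0..t_p. *)

Definition quad (R : realType) (n : nat) (A : 'M[R]_n) (b : 'cV[R]_n) (c : R)
  (s : 'cV[R]_n) : R :=
  2^-1 * (s^T *m A *m s) 0 0 + (b^T *m s) 0 0 + c.

(* Normal-form data, for n = p.+2. In case 2 the entry eps ord0 is unused
   (the paper's eps_j, j = 2..n-1, are our eps j for j = 1..p). *)
Inductive nf_case (R : realType) (p : nat) :=
| NF1 of ('I_p.+1 -> R)
| NF2 of ('I_p.+1 -> R) & R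
| NF3.

Definition sign_vec (R : realType) (p : nat) (eps : 'I_p.+1 -> R) :=
  forall j, eps j = 1 \/ eps j = -1.

Definition nf_valid (R : realType) (p : nat) (A : 'M[R]_p.+2) (k : nf_case R p) : Prop :=
  match k with
  | NF1 eps => sign_vec eps /\ \rank A = p.+1
  | NF2 eps c' => sign_vec eps /\ c' != 0 /\ \rank A = p.+2 /\
      (exists a, eigenvalue A a /\ 0 < a) /\ (exists a, eigenvalue A a /\ a < 0)
  | NF3 => \rank A = p.+2 /\
      ((forall a, eigenvalue A a -> 0 < a) \/ (forall a, eigenvalue A a -> a < 0))
  end.

Definition nf_eq (R : realType) (p : nat) (k : nf_case R p) (s' : 'cV[R]_p.+2) : Prop :=
  match k with
  | NF1 eps => \sum_(j < p.+1) eps j * s' (lift ord_max j) 0 ^+ 2 = s' ord_max 0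
  | NF2 eps c' => s' ord0 0 * s' ord_max 0
      + \sum_(j < p.+1 | (0 < j)%N) eps j * s' (lift ord_max j) 0 ^+ 2 = c'
  | NF3 => \sum_(i < p.+2) s' i 0 ^+ 2 = 1
  end.

Definition nf_dom (R : realType) (p : nat) (k : nf_case R p) : set 'rV[R]_p.+1 :=
  match k with
  | NF2 _ _ => [set t | t 0 ord0 != 0]
  | _ => setT
  end.

Definition nf_phi (R : realType) (p : nat) (t : 'rV[R]_p.+1) (j : 'I_p.+1) : R :=
  2 * atan (t 0 j).

Definition nf_sigma' (R : realType) (p : nat) (k : nf_case R p) (t : 'rV[R]_p.+1)
  : 'cV[R]_p.+2 :=
  \col_(i < p.+2)
   match k with
   | NF1 eps =>
       match unlift ord_max i with
       | Some j => t 0 j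
       | None => \sum_(j < p.+1) eps j * t 0 j ^+ 2
       end
   | NF2 eps c' =>
       match unlift ord_max i with
       | Some j => t 0 j
       | None => (t 0 ord0)^-1 *
                 (c' - \sum_(j < p.+1 | (0 < j)%N) eps j * t 0 j ^+ 2)
       end
   | NF3 =>
       match unlift ord_max i with
       | Some j => (\prod_(l < p.+1 | (l < j)%N) sin (nf_phi t l)) * cos (nf_phi t j)
       | None => \prod_(l < p.+1) sin (nf_phi t l)
       end
   end.

(* sigma-bar' = (sigma'_1, ..., sigma'_(n-1)), as a row vector (for 'J). *)
Definition nf_sigbar' (R : realType) (p : nat) (k : nf_case R p) (t : 'rV[R]_p.+1)
  : 'rV[R]_p.+1 :=
  \row_(j < p.+1) nf_sigma' k t (lift ord_max j) 0.

Definition nf_sigma (R : realType) (p : nat) (T : 'M[R]_p.+2) (v : 'cV[R]_p.+2)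
  (k : nf_case R p) (t : 'rV[R]_p.+1) : 'cV[R]_p.+2 :=
  T *m nf_sigma' k t + v.

(* Main.v *)
Require Import Defs.
From HB Require Import structures.
From mathcomp Require Import all_boot all_order all_algebra.
From mathcomp Require Import all_classical all_reals all_analysis.
From mathcomp Require Import ring lra zify.
Import Order.TTheory GRing.Theory Num.Theory.
Import numFieldNormedType.Exports.
Local Open Scope ring_scope.
Local Open Scope classical_set_scope.
Set Implicit Arguments. Unset Strict Implicit. Unset Printing Implicit Defensive.

Definition upd (R : ringType) n (t : 'rV[R]_n) (j : 'I_n) (x : R) : 'rV[R]_n :=
  \row_l (if l == j then x else t 0 l).

Lemma upd_eq (R : ringType) n (t : 'rV[R]_n) j x : upd t j x 0 j = x.
Proof. by rewrite mxE eqxx. Qed.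

Lemma upd_neq (R : ringType) n (t : 'rV[R]_n) j x l : l != j -> upd t j x 0 l = t 0 l.
Proof. by rewrite mxE => /negbTE ->. Qed.

Lemma upd_sum (R : ringType) n (t : 'rV[R]_n) j x (P : pred 'I_n) (F : 'I_n -> R -> R) :
  P j -> \sum_(l < n | P l) F l (upd t j x 0 l) = F j x + \sum_(l < n | P l && (l != j)) F l (t 0 l).
Proof.
move=> Pj; rewrite (bigD1 j) //= upd_eq; congr (_ + _).
by apply: eq_bigr => l /andP[_ hl]; rewrite upd_neq.
Qed.

Lemma upd_prod (R : comRingType) n (t : 'rV[R]_n) j x (P : pred 'I_n) (F : 'I_n -> R -> R) :
  P j -> \prod_(l < n | P l) F l (upd t j x 0 l) = F j x * \prod_(l < n | P l && (l != j)) F l (t 0 l).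
Proof.
move=> Pj; rewrite (bigD1 j) //= upd_eq; congr (_ * _).
by apply: eq_bigr => l /andP[_ hl]; rewrite upd_neq.
Qed.

Lemma open_box (R : realType) n (O : set 'rV[R]_n) t : open O -> O t ->
  exists2 e : R, 0 < e & forall t' : 'rV[R]_n, (forall j, `|t 0 j - t' 0 j| < e) -> O t'.
Proof.
move=> oO Ot. have : nbhs t O by apply: open_nbhs_nbhs; split.
move/nbhs_ballP => [e e0 H]; exists e => // t' Ht; apply: H.
split => // i j; rewrite (ord1 i) -ball_normE /ball_ /=. exact: Ht.
Qed.

Lemma good_point (R : realType) n (O : set 'rV[R]_n) t : open O -> O t ->
  exists t1 : 'rV[R]_n, exists2 h : R, 0 < h &
    (forall l, t1 0 l != 0) /\
    (forall j x, `|t1 0 j - x| <= h -> O (upd t1 j x)).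
Proof.
move=> oO Ot; have [e e0 He] := open_box oO Ot.
exists (\row_l (if t 0 l == 0 then e / 2 else t 0 l)), (e / 4).
  by rewrite divr_gt0.
split.
  move=> l; rewrite mxE; case: (t 0 l =P 0) => [_|/eqP //]; apply/eqP; lra.
move=> j x hx; apply: He => l.
have hl : forall l, `|t 0 l - (\row_l (if t 0 l == 0 then e / 2 else t 0 l)) 0 l| <= e / 2.
  move=> l'; rewrite mxE; case: eqP => [->|_]; last by rewrite subrr normr0 ltW // divr_gt0.
  by rewrite sub0r normrN ger0_norm // ltW // divr_gt0.
have [->|hlj] := eqVneq l j.
  rewrite upd_eq.
  apply: (le_lt_trans (ler_distD _ _ _)).
  apply: (le_lt_trans (lerD (hl j) hx)); lra.
rewrite upd_neq //; apply: (le_lt_trans (hl l)); lra.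
Qed.
Lemma quad3 (R : realType) (A B C x0 d : R) : d != 0 ->
  (forall x, x = x0 \/ x = x0 + d \/ x = x0 - d -> A * x^+2 + B * x + C = 0) ->
  [/\ A = 0, B = 0 & C = 0].
Proof.
move=> d0 H.
have E0 := H x0 (or_introl erefl).
have E1 := H (x0 + d) (or_intror (or_introl erefl)).
have E2 := H (x0 - d) (or_intror (or_intror erefl)).
have hA : 2 * A * d ^+ 2 = 0.
  transitivity ((A * (x0 + d)^+2 + B * (x0 + d) + C) + (A * (x0 - d)^+2 + B * (x0 - d) + C)
     - 2 * (A * x0^+2 + B * x0 + C)); first by ring.
  by rewrite E0 E1 E2; ring.
have A0 : A = 0.
  move/eqP: hA; rewrite !mulf_eq0 pnatr_eq0 /= (negbTE d0) !orbF.
  by move/eqP.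
have B0 : B = 0.
  have : B * d = 0.
    transitivity ((A * (x0 + d)^+2 + B * (x0 + d) + C) - (A * x0^+2 + B * x0 + C)); last first.
      by rewrite E0 E1 subrr.
    rewrite A0; ring.
  by move/eqP; rewrite mulf_eq0 (negbTE d0) orbF => /eqP.
split => //; move: E0; rewrite A0 B0; lra.
Qed.

Lemma cs2 (R : realType) (x : R) : cos (2 * atan x) = (1 - x^+2) / (1 + x^+2)
  /\ sin (2 * atan x) = 2 * x / (1 + x^+2).
Proof.
have h1 : 0 < 1 + x^+2 by rewrite ltr_pwDl // sqr_ge0.
have hc : cos (atan x) ^+ 2 = (1 + x^+2)^-1.
  by rewrite cos_atan exprVn sqr_sqrtr // ltW.
have hs : sin (atan x) = x * cos (atan x).
  rewrite -{2}(atanK x) /tan mulfVK //.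
  by rewrite cos_atan invr_eq0 gt_eqF // sqrtr_gt0.
have e2 : 2 * atan x = atan x + atan x by ring.
rewrite e2 cosD sinD hs.
split.
  transitivity ((1 - x^+2) * cos (atan x) ^+ 2); first by ring.
  by rewrite hc.
transitivity (2 * x * cos (atan x) ^+ 2); first by ring.
by rewrite hc.
Qed.

Lemma sin2_neq0 (R : realType) (x : R) : x != 0 -> sin (2 * atan x) != 0.
Proof.
move=> x0; have [_ ->] := cs2 x.
have h1 : 0 < 1 + x^+2 by rewrite ltr_pwDl // sqr_ge0.
by rewrite !mulf_neq0 // ?invr_eq0 ?gt_eqF // pnatr_eq0.
Qed.

Lemma trig3 (R : realType) (a g c x0 d : R) : d != 0 ->
  (forall x, x = x0 \/ x = x0 + d \/ x = x0 - d ->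
     a * cos (2 * atan x) + g * sin (2 * atan x) + c = 0) ->
  a = 0 /\ g = 0.
Proof.
move=> d0 H.
have := @quad3 R (c - a) (2 * g) (a + c) x0 d d0.
case.
  move=> x hx; have := H x hx; have [-> ->] := cs2 x => E.
  have h1 : 0 < 1 + x^+2 by rewrite ltr_pwDl // sqr_ge0.
  transitivity ((a * ((1 - x ^+ 2) / (1 + x ^+ 2)) + g * (2 * x / (1 + x ^+ 2)) + c) * (1 + x^+2)).
    by field; rewrite gt_eqF.
  by rewrite E mul0r.
move=> h1 h2 h3; split; lra.
Qed.

Lemma upd_sumT (R : ringType) n (t : 'rV[R]_n) j x (F : 'I_n -> R -> R) :
  \sum_(l < n) F l (upd t j x 0 l) = F j x + \sum_(l < n | l != j) F l (t 0 l).
Proof.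
rewrite (bigD1 j) //= upd_eq; congr (_ + _).
by apply: eq_bigr => l hl; rewrite upd_neq.
Qed.

Lemma upd_prodT (R : comRingType) n (t : 'rV[R]_n) j x (F : 'I_n -> R -> R) :
  \prod_(l < n) F l (upd t j x 0 l) = F j x * \prod_(l < n | l != j) F l (t 0 l).
Proof.
rewrite (bigD1 j) //= upd_eq; congr (_ * _).
by apply: eq_bigr => l hl; rewrite upd_neq.
Qed.

Theorem lemma5 (R : realType) (p : nat) (A : 'M[R]_p.+2) (b : 'cV[R]_p.+2) (c : R)
  (T : 'M[R]_p.+2) (v : 'cV[R]_p.+2) (k : nf_case R p) (O : set 'rV[R]_p.+1) :
  A^T = A -> A != 0 ->
  (exists s1 s2 : 'cV[R]_p.+2, s1 != s2 /\ quad A b c s1 = 0 /\ quad A b c s2 = 0) ->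
  ~ (exists (s0 d : 'cV[R]_p.+2), d != 0 /\
       forall lam : R, quad A b c (s0 + lam *: d) = 0) ->
  T \in unitmx -> nf_valid A k ->
  (forall s' : 'cV[R]_p.+2, quad A b c (T *m s' + v) = 0 <-> nf_eq k s') ->
  open O -> O `<=` nf_dom k ->
  (forall t, O t -> nf_sigma T v k t 0 0 != 0) ->
  (exists t, O t /\ \det (jacobian (nf_sigbar' k) t) != 0) ->
  ~ (exists (a : 'cV[R]_p.+2) (beta : R), a != 0 /\
       forall t, O t -> (a^T *m nf_sigma T v k t) 0 0 = beta).
Proof.
move=> _ _ _ _ Tu kv _ oO OD _ [t0 [Ot0 _]] [a [beta [a0 Ha]]].
set w := T^T *m a.
have w0 : w != 0.
  apply: contra a0 => /eqP w0; apply/eqP.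
  by rewrite -(mulKmx (x:=T^T) _ a) ?unitmx_tr // -/w w0 mulmx0.
set beta' := beta - (a^T *m v) 0 0.
have Hg : forall t, O t -> \sum_(j < p.+1) w (lift ord_max j) 0 * nf_sigma' k t (lift ord_max j) 0
     + w ord_max 0 * nf_sigma' k t ord_max 0 = beta'.
  move=> t Ot; rewrite /beta' -(Ha t Ot).
  have -> : (a^T *m nf_sigma T v k t) 0 0 = \sum_(i < p.+2) w i 0 * nf_sigma' k t i 0 + (a^T *m v) 0 0.
    rewrite /nf_sigma mulmxDr mulmxA mxE; congr (_ + _).
    have -> : a^T *m T = w^T by rewrite /w trmx_mul trmxK.
    rewrite mxE; apply: eq_bigr => i _; by rewrite mxE.
  rewrite addrK [RHS]big_ord_recr /=; congr (_ + _); apply: eq_bigr => j _.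
  have -> // : widen_ord (leqnSn _) j = lift ord_max j.
  by apply: val_inj => /=; rewrite /bump leqNgt ltn_ord.
clearbody w beta'.
have [t1 [h h0 [t1nz Ht1]]] := good_point oO Ot0.
have h0' : h != 0 by rewrite gt_eqF.
have pts : forall j x, x = t1 0 j \/ x = t1 0 j + h \/ x = t1 0 j - h -> O (upd t1 j x).
  move=> j x hx; apply: Ht1; rewrite ler_norml.
  by case: hx => [->|[->|->]]; apply/andP; split; lra.
suff [Hj HL] : (forall j, w (lift ord_max j) 0 = 0) /\ w ord_max 0 = 0.
  move/eqP: w0; apply; apply/matrixP => i j; rewrite (ord1 j) [RHS]mxE.
  by case: (unliftP ord_max i) => [j'|] ->; [exact: Hj | exact: HL].
clear Ha; case: k kv OD Hg => [eps|eps c'|] kv OD Hg.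
-
  have Hg1 : forall t, O t -> \sum_j w (lift ord_max j) 0 * t 0 j
        + w ord_max 0 * \sum_j eps j * t 0 j ^+ 2 = beta'.
    move=> t Ot; rewrite -(Hg t Ot) mxE unlift_none; congr (_ + _).
    by apply: eq_bigr => j _; rewrite mxE liftK.
  have step : forall j, w ord_max 0 * eps j = 0 /\ w (lift ord_max j) 0 = 0.
    move=> j.
    have HQ : forall x, x = t1 0 j \/ x = t1 0 j + h \/ x = t1 0 j - h ->
      (w ord_max 0 * eps j) * x ^+ 2 + w (lift ord_max j) 0 * x +
      (\sum_(l | l != j) w (lift ord_max l) 0 * t1 0 l
          + w ord_max 0 * \sum_(l | l != j) eps l * t1 0 l ^+ 2 - beta') = 0.
      move=> x hx; have := Hg1 _ (pts j x hx).
      rewrite (upd_sumT _ _ _ (fun l y => w (lift ord_max l) 0 * y)).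
      rewrite (upd_sumT _ _ _ (fun l y => eps l * y ^+ 2)) => E.
      rewrite -E; ring.
    by have [-> -> _] := quad3 h0' HQ.
  have [_ _] := kv.
  have e0 : eps ord0 != 0 by case: (kv.1 ord0) => ->; apply/eqP; lra.
  split; first by move=> j; case: (step j).
  by have [/eqP] := step ord0; rewrite mulf_eq0 (negbTE e0) orbF => /eqP.
-
  have [eps_s [c0 _]] := kv.
  have Hg2 : forall t, O t -> \sum_j w (lift ord_max j) 0 * t 0 j
        + w ord_max 0 * ((t 0 ord0)^-1 *
            (c' - \sum_(j < p.+1 | (0 < j)%N) eps j * t 0 j ^+ 2)) = beta'.
    move=> t Ot; rewrite -(Hg t Ot) mxE unlift_none; congr (_ + _).
    by apply: eq_bigr => j _; rewrite mxE liftK.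
  set K := c' - \sum_(j < p.+1 | (0 < j)%N) eps j * t1 0 j ^+ 2.
  have stepA : w (lift ord_max ord0) 0 = 0 /\ w ord_max 0 * K = 0.
    have HQ : forall x, x = t1 0 ord0 \/ x = t1 0 ord0 + h \/ x = t1 0 ord0 - h ->
        w (lift ord_max ord0) 0 * x^+2
        + (\sum_(l | l != ord0) w (lift ord_max l) 0 * t1 0 l - beta') * x
        + w ord_max 0 * K = 0.
      move=> x hx; have Ox := pts ord0 x hx.
      have x0 : x != 0 by have := OD _ Ox; rewrite /= upd_eq.
      have := Hg2 _ Ox; rewrite (upd_sumT _ _ _ (fun l y => w (lift ord_max l) 0 * y)) upd_eq.
      have -> : \sum_(j < p.+1 | (0 < j)%N) eps j * upd t1 ord0 x 0 j ^+ 2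
             = \sum_(j < p.+1 | (0 < j)%N) eps j * t1 0 j ^+ 2.
        by apply: eq_bigr => j hj; rewrite upd_neq //; apply: contraTneq hj => ->.
      rewrite -/K => E; rewrite -E; field; exact: x0.
    by have [-> _ ->] := quad3 h0' HQ.
  have stepB : forall j : 'I_p.+1, (0 < j)%N -> w ord_max 0 = 0 /\ w (lift ord_max j) 0 = 0.
    move=> j hj.
    have t10 := t1nz ord0.
    have HQ : forall x, x = t1 0 j \/ x = t1 0 j + h \/ x = t1 0 j - h ->
        (- (w ord_max 0 * (t1 0 ord0)^-1 * eps j)) * x^+2 + w (lift ord_max j) 0 * x
        + (\sum_(l | l != j) w (lift ord_max l) 0 * t1 0 l
           + w ord_max 0 * ((t1 0 ord0)^-1 *
               (c' - \sum_(l < p.+1 | (0 < l)%N && (l != j)) eps l * t1 0 l ^+ 2))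
           - beta') = 0.
      move=> x hx; have := Hg2 _ (pts j x hx).
      rewrite (upd_sumT _ _ _ (fun l y => w (lift ord_max l) 0 * y)).
      rewrite (upd_sum _ _ (fun l y => eps l * y ^+ 2) hj).
      rewrite upd_neq; last by apply: contraTneq hj => <-.
      move=> E; rewrite -E; ring.
    have [hA -> _] := quad3 h0' HQ; split => //.
    have ej : eps j != 0 by case: (eps_s j) => ->; apply/eqP; lra.
    move/eqP: hA; rewrite oppr_eq0 !mulf_eq0 invr_eq0 (negbTE t10) (negbTE ej) !orbF.
    by move/eqP.
  split.
    move=> j; have [->|hj] := eqVneq j ord0; first by case: stepA.
    have hj' : (0 < j)%N by rewrite lt0n; apply: contra hj => /eqP hh; apply/eqP/val_inj.
    by case: (stepB j hj').
  case: (posnP p) => [p0|pp]; last by case: (stepB (@ord_max p) pp).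
  have [_ /eqP] := stepA.
  have -> : K = c'.
    rewrite /K big1 ?subr0 // => j hj; have := ltn_ord j; lia.
  by rewrite mulf_eq0 (negbTE c0) orbF => /eqP.
-
  have Hg3 : forall t, O t -> \sum_j w (lift ord_max j) 0 *
          ((\prod_(l < p.+1 | (l < j)%N) sin (2 * atan (t 0 l))) * cos (2 * atan (t 0 j)))
        + w ord_max 0 * \prod_(l < p.+1) sin (2 * atan (t 0 l)) = beta'.
    move=> t Ot; rewrite -(Hg t Ot) mxE unlift_none; congr (_ + _).
    by apply: eq_bigr => j _; rewrite mxE liftK.
  have step : forall j : 'I_p.+1, (forall i : 'I_p.+1, (j < i)%N -> w (lift ord_max i) 0 = 0) ->
      w (lift ord_max j) 0 = 0 /\ w ord_max 0 = 0.
    move=> j Hi.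
    set Pj := \prod_(l < p.+1 | (l < j)%N) sin (2 * atan (t1 0 l)).
    set Qj := \prod_(l < p.+1 | l != j) sin (2 * atan (t1 0 l)).
    have HT : forall x, x = t1 0 j \/ x = t1 0 j + h \/ x = t1 0 j - h ->
        (w (lift ord_max j) 0 * Pj) * cos (2 * atan x) + (w ord_max 0 * Qj) * sin (2 * atan x)
        + (\sum_(i | i != j) w (lift ord_max i) 0 *
          ((\prod_(l < p.+1 | (l < i)%N) sin (2 * atan (t1 0 l))) * cos (2 * atan (t1 0 i)))
           - beta') = 0.
      move=> x hx; have := Hg3 _ (pts j x hx).
      rewrite (bigD1 j) //= upd_eq.
      have -> : \prod_(l < p.+1 | (l < j)%N) sin (2 * atan (upd t1 j x 0 l)) = Pj.
        by apply: eq_bigr => l hl; rewrite upd_neq //; apply: contraTneq hl => ->; rewrite ltnn.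
      have -> : \sum_(i < p.+1 | i != j) w (lift ord_max i) 0 *
          ((\prod_(l < p.+1 | (l < i)%N) sin (2 * atan (upd t1 j x 0 l))) * cos (2 * atan (upd t1 j x 0 i)))
          = \sum_(i < p.+1 | i != j) w (lift ord_max i) 0 *
          ((\prod_(l < p.+1 | (l < i)%N) sin (2 * atan (t1 0 l))) * cos (2 * atan (t1 0 i))).
        apply: eq_bigr => i hij; case: (ltngtP i j) => [hlt|hgt|heq].
        - rewrite upd_neq //; congr (_ * (_ * _)); apply: eq_bigr => l hl.
          rewrite upd_neq //; apply: contraTneq hl => ->; by rewrite -leqNgt ltnW.
        - by rewrite Hi // !mul0r.
        - by move: hij; rewrite (val_inj heq) eqxx.
      rewrite (upd_prodT _ _ _ (fun l y => sin (2 * atan y))) -/Qj => E.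
      rewrite -E; ring.
    have [h1 h2] := trig3 h0' HT.
    have Pj0 : Pj != 0 by apply/prodf_neq0 => l _; apply: sin2_neq0.
    have Qj0 : Qj != 0 by apply/prodf_neq0 => l _; apply: sin2_neq0.
    move/eqP: h1; move/eqP: h2; rewrite !mulf_eq0 (negbTE Pj0) (negbTE Qj0) !orbF.
    by move=> /eqP -> /eqP ->.
  have all : forall m (j : 'I_p.+1), (p <= j + m)%N -> w (lift ord_max j) 0 = 0.
    elim=> [|m IH] j hj; apply: (proj1 (step j _)) => i hi.
      by have := ltn_ord i; lia.
    by apply: IH; lia.
  split; first by move=> j; apply: (all p); lia.
  apply: (proj2 (step (@ord_max p) _)) => i hi.
  by have := ltn_ord i; move: hi => /=; lia.
Qed.
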